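(* Let $n\ge 13$ and let $CT_n$ be the set of chemical trees on $n$ vertices. For a tree $T$ write $\mathbf m(T)=(m_{3,3}(T),m_{2,3}(T),m_{1,2}(T),m_{1,3}(T),m_{2,2}(T))$. For $1\le i\le 13$ let $A_i$ be the set of trees $T\in CT_n$ with $\Delta(T)\le 3$, $n_3(T)\le 2$ and $\mathbf m(T)$ equal to the following vector: $A_1:(0,0,2,0,n-3)$; $A_2:(0,1,1,2,n-5)$; $A_3:(0,2,2,1,n-6)$; $A_4:(0,3,3,0,n-7)$; $A_5:(0,2,0,4,n-7)$; $A_6:(0,3,1,3,n-8)$; $A_7:(0,4,2,2,n-9)$; $A_8:(1,1,1,3,n-7)$; $A_9:(0,5,3,1,n-10)$; $A_{10}:(1,2,2,2,n-8)$; $A_{11}:(0,6,4,0,n-11)$; $A_{12}:(1,3,3,1,n-9)$; $A_{13}:(1,4,4,0,n-10)$. Let $\Omega(n)$ be the set of trees $T\in CT_n$ having $3$ vertices of degree $3$, $n-8$ vertices of degree $2$ and $5$ vertices of degree $1$, with $m_{1,2}(T)=m_{2,3}(T)=5$, $m_{1,3}(T)=0$, $m_{3,3}(T)=2$, $m_{2,2}(T)=n-13$. Let $T_1\in A_1$, $T_2\in A_4$, $T_3\in A_3$, $T_4\in A_2$, $T_5\in A_{13}$, $T_6\in A_{12}$, $T_7\in A_{11}$, $T_8\in A_{10}$, $T_9\in A_9$, $T_{10}\in A_8$, $T_{11}\in A_7$, $T_{12}\in A_6$, $T_{13}\in A_5$, $T_{14}\in\Omega(n)$, and let $T\in CT_n$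 not belong to $A_1\cup\cdots\cup A_{13}\cup\Omega(n)$. Then $SO_{red}(T_1)<SO_{red}(T_2)<\cdots<SO_{red}(T_{13})<SO_{red}(T_{14})<SO_{red}(T)$.
   Context: All graphs are simple and connected. A chemical graph is a graph with maximum degree at most $4$; a chemical tree is a chemical graph that is a tree. $d_G(u)$ is the degree of $u$, $\Delta(G)$ the maximum degree, $n_i(G)$ the number of vertices of degree $i$, and $m_{i,j}(G)$ the number of edges joining a vertex of degree $i$ to a vertex of degree $j$. The reduced Sombor index is $SO_{red}(G)=\sum_{uv\in E(G)}\sqrt{(d_G(u)-1)^2+(d_G(v)-1)^2}$. *)

(* Defs.v *)
From HB Require Import structures.
From mathcomp Require Import all_boot all_order all_algebra.
From mathcomp Require Import Rstruct.
From Stdlib Require Import Reals.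
Set Implicit Arguments. Unset Strict Implicit. Unset Printing Implicit Defensive.
Import Order.TTheory GRing.Theory Num.Theory.

Definition simple_graph (n : nat) (e : rel 'I_n) : Prop :=
  symmetric e /\ irreflexive e.

(* edge set: unordered pairs {u,v} represented as (u,v) with u < v *)
Definition edges (n : nat) (e : rel 'I_n) : {set 'I_n * 'I_n} :=
  [set p : 'I_n * 'I_n | (p.1 < p.2)%N && e p.1 p.2].

Definition deg (n : nat) (e : rel 'I_n) (v : 'I_n) : nat := #|[set w | e v w]|.

Definition connected_graph (n : nat) (e : rel 'I_n) : Prop :=
  forall x y : 'I_n, connect e x y.

Definition is_tree (n : nat) (e : rel 'I_n) : Prop :=
  simple_graph e /\ connected_graph e /\ #|edges e| = n.-1.

Definition chemical (n : nat) (e : rel 'I_n) : Prop := forall v, (deg e v <= 4)%N.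

Definition chemical_tree (n : nat) (e : rel 'I_n) : Prop := is_tree e /\ chemical e.

Definition ndeg (n : nat) (e : rel 'I_n) (i : nat) : nat :=
  #|[set v | deg e v == i]|.

Definition medge (n : nat) (e : rel 'I_n) (i j : nat) : nat :=
  #|[set p in edges e | ((deg e p.1 == i) && (deg e p.2 == j))
                        || ((deg e p.1 == j) && (deg e p.2 == i))]|.

Definition maxdeg_le (n : nat) (e : rel 'I_n) (k : nat) : Prop :=
  forall v, (deg e v <= k)%N.

Local Open Scope ring_scope.
Definition SO_red (n : nat) (e : rel 'I_n) : R :=
  \sum_(p in edges e)
     sqrt (((deg e p.1)%:R - 1) ^+ 2 + ((deg e p.2)%:R - 1) ^+ 2).

Local Close Scope ring_scope.

Definition mvec (n : nat) (e : rel 'I_n) : nat * nat * nat * nat * nat :=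
  (medge e 3 3, medge e 2 3, medge e 1 2, medge e 1 3, medge e 2 2).

Definition Avec (n i : nat) : nat * nat * nat * nat * nat :=
  match i with
  | 1 => (0, 0, 2, 0, n - 3)
  | 2 => (0, 1, 1, 2, n - 5)
  | 3 => (0, 2, 2, 1, n - 6)
  | 4 => (0, 3, 3, 0, n - 7)
  | 5 => (0, 2, 0, 4, n - 7)
  | 6 => (0, 3, 1, 3, n - 8)
  | 7 => (0, 4, 2, 2, n - 9)
  | 8 => (1, 1, 1, 3, n - 7)
  | 9 => (0, 5, 3, 1, n - 10)
  | 10 => (1, 2, 2, 2, n - 8)
  | 11 => (0, 6, 4, 0, n - 11)
  | 12 => (1, 3, 3, 1, n - 9)
  | 13 => (1, 4, 4, 0, n - 10)
  | _ => (0, 0, 0, 0, 0)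
  end.

Definition inA (n : nat) (i : nat) (e : rel 'I_n) : Prop :=
  chemical_tree e /\ maxdeg_le e 3 /\ (ndeg e 3 <= 2)%N /\ mvec e = Avec n i.

Definition inOmega (n : nat) (e : rel 'I_n) : Prop :=
  chemical_tree e /\ ndeg e 3 = 3 /\ ndeg e 2 = n - 8 /\ ndeg e 1 = 5 /\
  medge e 1 2 = 5 /\ medge e 2 3 = 5 /\ medge e 1 3 = 0 /\
  medge e 3 3 = 2 /\ medge e 2 2 = n - 13.

Definition classT (n k : nat) (e : rel 'I_n) : Prop :=
  match k with
  | 1 => inA 1 e
  | 2 => inA 4 e
  | 3 => inA 3 e
  | 4 => inA 2 e
  | 14 => inOmega e
  | _ => inA (18 - k) e
  end.

(* Main.v *)
Require Import Defs.
From mathcomp Require Import all_boot all_order all_algebra.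
From mathcomp Require Import Rstruct.
From mathcomp Require Import ring lra zify.
Set Implicit Arguments. Unset Strict Implicit. Unset Printing Implicit Defensive.
Import Order.TTheory GRing.Theory Num.Theory.

Notation RR := Rdefinitions.R.
Lemma card_sum (T : finType) (P : pred T) : #|[set x | P x]| = \sum_x (P x : nat).
Proof.
rewrite -sum1_card big_mkcond /=; apply: eq_bigr => x _; rewrite inE; by case: (P x).
Qed.

Lemma ord_neq_lt (n : nat) (a b : 'I_n) : a != b -> ~~ (b < a)%N = (a < b)%N.
Proof.
move=> nab; have : (a : nat) <> b by move=> h; move/eqP: nab; apply; apply: val_inj.
lia.
Qed.

Lemma sum_arcs_edges (n : nat) (e : rel 'I_n) (V : nmodType) (F : 'I_n * 'I_n -> V)
  (Q : pred ('I_n * 'I_n)) :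
  symmetric e -> irreflexive e ->
  (forall x, F (x.2, x.1) = F x) -> (forall x, Q (x.2, x.1) = Q x) ->
  (\sum_(x | e x.1 x.2 && Q x) F x = (\sum_(p in edges e | Q p) F p) *+ 2)%R.
Proof.
move=> sym irr hF hQ.
rewrite (bigID (fun x : 'I_n * 'I_n => (x.1 < x.2)%N)) /= mulr2n; congr (_ + _)%R.
  apply: eq_bigl => x; rewrite inE; by case: (e _ _); case: (Q x); case: (_ < _)%N.
rewrite (reindex_inj (h := fun x => (x.2, x.1))); last by move=> [a b] [c d] /= [-> ->].
apply: eq_big => [x|x _]; last exact: hF.
rewrite /= hQ sym inE.
case: x => a b /=.
case exy: (e a b); rewrite ?andbF ?andbT //=.
have nab : a != b by apply: contraTneq exy => ->; rewrite irr.
case: (Q (a,b)); rewrite ?andbF ?andbT //=.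
exact: ord_neq_lt.
Qed.

Lemma arcnt_row (n : nat) (e : rel 'I_n) (P Q : pred 'I_n) :
  #|[set x | e x.1 x.2 && P x.1 && Q x.2]| = \sum_(v | P v) #|[set w | e v w && Q w]|.
Proof.
rewrite (card_sum (fun x : 'I_n * 'I_n => e x.1 x.2 && P x.1 && Q x.2)).
rewrite [RHS](eq_bigr (fun v => \sum_w (e v w && Q w : nat))); last first.
  by move=> v _; rewrite (card_sum (fun w => e v w && Q w)).
rewrite (pair_big_dep P (fun _ _ => true) (fun v w => (e v w && Q w : nat))) /=.
rewrite [RHS]big_mkcond /=; apply: eq_bigr => x _.
by case: (P x.1); rewrite ?andbT ?andbF.
Qed.

Lemma sum_arcs_fst (n : nat) (e : rel 'I_n) (V : nmodType) (g : 'I_n -> V) :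
  (\sum_(x | e x.1 x.2) g x.1 = \sum_v g v *+ deg e v)%R.
Proof.
symmetry.
rewrite (eq_bigr (fun v => \sum_(w | e v w) g v)%R); last first.
  move=> v _; rewrite /deg -sumr_const; apply: eq_bigl => w; by rewrite inE.
by rewrite (pair_big_dep xpredT (fun v w => e v w) (fun v _ => g v)) /=.
Qed.

Lemma sum_deg_part (n : nat) (e : rel 'I_n) (V : nmodType) (f : nat -> V) :
  (forall v, deg e v < 5)%N ->
  (\sum_v f (deg e v) = \sum_(i < 5) f i *+ ndeg e i)%R.
Proof.
move=> h5.
rewrite (partition_big (fun v => inord (deg e v) : 'I_5) xpredT) //.
apply: eq_bigr => i _.
transitivity (\sum_(v | deg e v == i) f i)%R.
  apply: eq_big => [v|v /andP [_ /eqP <-]]; last by rewrite inordK.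
  by rewrite /= -val_eqE /= inordK.
by rewrite /ndeg -sumr_const; apply: eq_bigl => v; rewrite inE.
Qed.


Lemma closed_nconn (n : nat) (e : rel 'I_n) (S : {set 'I_n}) :
  connected_graph e -> (forall u v, u \in S -> e u v -> v \in S) ->
  forall u v, u \in S -> v \notin S -> False.
Proof.
move=> conn cl u v uS vS.
have /connectP [p pth lst] := conn u v.
elim: p u uS pth lst => [|w p IH] u uS /=.
  by move=> _ luv; move: vS; rewrite luv uS.
move=> /andP [euw pth] lst.
exact: (IH w (cl u w uS euw) pth lst).
Qed.

Lemma exists_out (n : nat) (S : {set 'I_n}) : (#|S| < n)%N -> exists w, w \notin S.
Proof.
move=> hS; case: (pickP (fun w => w \notin S)) => [w hw|h0]; first by exists w.
have : S = setT by apply/setP => w; rewrite inE; move: (h0 w) => /= /negbFE.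
by move=> hT; rewrite hT cardsT card_ord ltnn in hS.
Qed.

Lemma deg_pos (n : nat) (e : rel 'I_n) u v : e u v -> (0 < deg e u)%N.
Proof. by move=> euv; apply/card_gt0P; exists v; rewrite inE. Qed.

Lemma deg1_uniq (n : nat) (e : rel 'I_n) u a b :
  deg e u = 1%N -> e u a -> e u b -> a = b.
Proof.
move=> /eqP /cards1P [c hc] ea eb.
have : a \in [set w | e u w] by rewrite inE.
have : b \in [set w | e u w] by rewrite inE.
by rewrite hc !inE => /eqP -> /eqP ->.
Qed.

Lemma no_iso (n : nat) (e : rel 'I_n) v :
  connected_graph e -> (2 <= n)%N -> deg e v <> 0%N.
Proof.
move=> conn hn d0.
have [w hw] : exists w, w \notin [set v] by apply: exists_out; rewrite cards1.
apply: (closed_nconn conn _ (set11 v) hw) => a b; rewrite inE => /eqP -> evb.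
have : b \in [set w | e v w] by rewrite inE.
by move/eqP: d0; rewrite /deg cards_eq0 => /eqP ->; rewrite inE.
Qed.

Lemma no_leafpair (n : nat) (e : rel 'I_n) u v :
  symmetric e -> connected_graph e -> (3 <= n)%N -> e u v ->
  deg e u = 1%N -> deg e v = 1%N -> False.
Proof.
move=> sym conn hn euv du dv.
have [w hw] : exists w, w \notin [set u; v].
  by apply: exists_out; rewrite cards2; case: (u != v); lia.
apply: (closed_nconn conn _ (set21 u v) hw) => a b; rewrite !inE.
case/orP => /eqP -> eab.
  by rewrite (deg1_uniq du eab euv) eqxx orbT.
by rewrite sym in euv; rewrite (deg1_uniq dv eab euv) eqxx.
Qed.

Definition reach (n : nat) (e : rel 'I_n) (r : 'I_n) (k : nat) : {set 'I_n} :=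
  iter k (fun X => X :|: [set w | [exists v in X, e v w]]) [set r].

Lemma reach_sub n (e : rel 'I_n) r k : reach e r k \subset reach e r k.+1.
Proof. by rewrite /reach iterS subsetUl. Qed.

Lemma reach_step n (e : rel 'I_n) r k u w :
  u \in reach e r k -> e u w -> w \in reach e r k.+1.
Proof.
move=> hu euw; rewrite /reach iterS in_setU; apply/orP; right.
by rewrite inE; apply/existsP; exists u; rewrite hu euw.
Qed.

Lemma reach_conn n (e : rel 'I_n) r v : connect e r v -> exists k, v \in reach e r k.
Proof.
move/connectP => [p pth ->].
elim/last_ind: p pth => [|p w IH] /=; first by exists 0%N; rewrite /reach /= set11.
rewrite rcons_path => /andP [pth ew]; have [k hk] := IH pth.
by exists k.+1; rewrite last_rcons; exact: reach_step hk ew.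
Qed.

Lemma conn_edges (n : nat) (e : rel 'I_n) (r : 'I_n) :
  symmetric e -> connected_graph e -> (n.-1 <= #|edges e|)%N.
Proof.
move=> sym conn.
have hex : forall v, exists k, v \in reach e r k by move=> v; apply: reach_conn.
pose d v := ex_minn (hex v).
have hpar : forall v, v != r -> exists u, e u v && (d u < d v)%N.
  move=> v vr; rewrite /d.
  case: (ex_minnP (hex v)) => m hm hmin.
  case: m hm hmin => [|k] hm hmin.
    by move: hm; rewrite /reach /= inE (negbTE vr).
  have nvk : v \notin reach e r k.
    by apply/negP => /hmin; rewrite ltnn.
  move: hm; rewrite /reach iterS -/(reach e r k) in_setU (negbTE nvk) /= inE.
  case/existsP => u /andP [hu euv]; exists u; rewrite euv /=.
  case: (ex_minnP (hex u)) => m' hm' hmin'.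
  by rewrite ltnS; apply: hmin'.
pose par v := odflt v [pick u | e u v && (d u < d v)%N].
have hp : forall v, v != r -> e (par v) v && (d (par v) < d v)%N.
  move=> v vr; rewrite /par; case: pickP => [u hu //|h0].
  by have [u hu] := hpar v vr; move: (h0 u); rewrite hu.
pose f (v : 'I_n) := if (v < par v)%N then (v, par v) else (par v, v).
have fin : forall v, v != r -> f v \in edges e.
  move=> v vr; have /andP [ep dp] := hp v vr.
  have npv : (par v : nat) <> v by move=> /val_inj h; move: dp; rewrite h ltnn.
  rewrite /f inE; case: ifP => /= hlt.
    by rewrite hlt -sym.
  by rewrite ep andbT; lia.
have finj : {in [set~ r] &, injective f}.
  move=> v w; rewrite !in_setC1 => vr wr.
  have /andP [_ dv] := hp v vr; have /andP [_ dw] := hp w wr.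
  rewrite /f; case: ifP => _; case: ifP => _ [h1 h2] //.
  1,2: first [ by move: dv dw; rewrite h2 -h1; lia | by move: dv dw; rewrite h1 -h2; lia ].
have := card_in_imset finj; rewrite cardsC1 card_ord => <-.
apply: subset_leq_card; apply/subsetP => x /imsetP [v]; rewrite in_setC1 => vr ->.
exact: fin.
Qed.

Lemma no_triangle (n : nat) (e : rel 'I_n) a b c :
  is_tree e -> e a b -> e b c -> e a c -> False.
Proof.
move=> [[sym irr] [conn ecard]] eab ebc eac.
have nab : a != b by apply: contraTneq eab => ->; rewrite irr.
have nbc : b != c by apply: contraTneq ebc => ->; rewrite irr.
have nac : a != c by apply: contraTneq eac => ->; rewrite irr.
pose e' := fun x y => e x y && ~~ (((x == a) && (y == b)) || ((x == b) && (y == a))).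
have sym' : symmetric e'.
  move=> x y; rewrite /e' sym; congr (_ && ~~ _).
  by rewrite orbC [(y == a) && _]andbC [(y == b) && _]andbC.
have eac' : e' a c by rewrite /e' eac eqxx /= (negbTE nab) eq_sym (negbTE nbc).
have ecb' : e' c b.
  by rewrite /e' -sym ebc eqxx andbT eq_sym (negbTE nac) eq_sym (negbTE nbc).
have conn' : connected_graph e'.
  move=> x y; apply: (connect_sub _ (conn x y)) => {x y} x y exy.
  case: (boolP (((x == a) && (y == b)) || ((x == b) && (y == a)))) => h.
    case/orP: h => /andP [/eqP -> /eqP ->].
      exact: connect_trans (connect1 eac') (connect1 ecb').
    rewrite sym' in ecb'; rewrite sym' in eac'.
    exact: connect_trans (connect1 ecb') (connect1 eac').
  by apply: connect1; rewrite /e' exy h.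
have h1 := conn_edges a sym' conn'.
have hp : edges e' \proper edges e.
  apply/properP; split.
    by apply/subsetP => x; rewrite !inE => /andP [-> /andP [-> _]].
  exists (if (a < b)%N then (a, b) else (b, a)).
    rewrite inE; case: ifP => /= h; first by rewrite h eab.
    by rewrite -sym eab andbT; move: h; rewrite -(ord_neq_lt nab) => /negbFE.
  rewrite inE /e'; case: ifP => /= _; by rewrite !eqxx /= ?orbT !andbF.
have := proper_card hp; rewrite ecard; lia.
Qed.

Definition sum4 (V : nmodType) (F : nat -> V) : V := (F 1%N + F 2%N + F 3%N + F 4%N)%R.

Definition Mc (n : nat) (e : rel 'I_n) (i j : nat) : nat :=
  #|[set x : 'I_n * 'I_n | e x.1 x.2 && (deg e x.1 == i) && (deg e x.2 == j)]|.

Lemma Mc_sum (n : nat) (e : rel 'I_n) i j :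
  Mc e i j = \sum_(x | e x.1 x.2 && (deg e x.1 == i) && (deg e x.2 == j)) 1%N.
Proof. by rewrite /Mc -sum1_card; apply: eq_bigl => x; rewrite inE. Qed.

Lemma part_arcs (n : nat) (e : rel 'I_n) (V : nmodType) (F : 'I_n * 'I_n -> V) :
  (forall x, e x.1 x.2 -> (1 <= deg e x.1 <= 4)%N /\ (1 <= deg e x.2 <= 4)%N) ->
  (\sum_(x | e x.1 x.2) F x =
  sum4 (fun i => sum4 (fun j =>
     \sum_(x | e x.1 x.2 && (deg e x.1 == i) && (deg e x.2 == j)) F x)))%R.
Proof.
move=> hd.
rewrite /sum4 big_mkcond !(big_mkcond (fun x : 'I_n * 'I_n => e x.1 x.2 && _ && _)) -!big_split /=; apply: eq_bigr => x _.
case ex: (e x.1 x.2) => /=; last by rewrite !addr0.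
have [/andP [a1 a4] /andP [b1 b4]] := hd x ex.
move: (deg e x.1) (deg e x.2) a1 a4 b1 b4 => a b a1 a4 b1 b4.
have : [|| a == 1%N, a == 2%N, a == 3%N | a == 4%N] by lia.
have : [|| b == 1%N, b == 2%N, b == 3%N | b == 4%N] by lia.
by move=> /or4P [] /eqP -> /or4P [] /eqP -> /=; rewrite ?addr0 ?add0r.
Qed.

Lemma Mc_sym (n : nat) (e : rel 'I_n) i j : symmetric e -> Mc e i j = Mc e j i.
Proof.
move=> sym; rewrite !Mc_sum.
rewrite (reindex_inj (h := fun x : 'I_n * 'I_n => (x.2, x.1))); last first.
  by move=> [a b] [c d] /= [-> ->].
apply: eq_bigl => x /=; rewrite sym; by case: (e _ _); case: (_ == i); case: (_ == j).
Qed.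

Lemma Mc_W (n : nat) (e : rel 'I_n) (V : nmodType) (W : nat -> nat -> V) i j :
  (\sum_(x | e x.1 x.2 && (deg e x.1 == i) && (deg e x.2 == j)) W (deg e x.1) (deg e x.2)
   = W i j *+ Mc e i j)%R.
Proof.
rewrite /Mc -sumr_const; apply: eq_big => [x|x]; first by rewrite inE.
by move=> /andP [/andP [_ /eqP ->] /eqP ->].
Qed.

Lemma medge_Mc_gen (n : nat) (e : rel 'I_n) i j : symmetric e -> irreflexive e ->
  (medge e i j * 2 = \sum_(x | e x.1 x.2 && (((deg e x.1 == i) && (deg e x.2 == j)) ||
       ((deg e x.1 == j) && (deg e x.2 == i)))) 1)%N.
Proof.
move=> sym irr.
pose Q := fun x : 'I_n * 'I_n =>
  ((deg e x.1 == i) && (deg e x.2 == j)) || ((deg e x.1 == j) && (deg e x.2 == i)).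
have := @sum_arcs_edges n e nat (fun _ => 1%N) Q sym irr (fun _ => erefl).
have hQ : forall x, Q (x.2, x.1) = Q x.
  by move=> x; rewrite /Q /= orbC; congr (_ || _); apply: andbC.
move=> /(_ hQ) h.
have hm : medge e i j = \sum_(p in edges e | Q p) 1%N.
  by rewrite /medge -sum1_card; apply: eq_bigl => x; rewrite !inE.
have h' : (\sum_(x | e x.1 x.2 && Q x) 1 =
   (\sum_(p in edges e | Q p) 1) + \sum_(p in edges e | Q p) 1)%N := etrans h (mulr2n _).
by rewrite hm muln2 -addnn -h'.
Qed.

Lemma medge_Mc_eq (n : nat) (e : rel 'I_n) i : symmetric e -> irreflexive e ->
  (medge e i i * 2 = Mc e i i)%N.
Proof.
move=> sym irr; rewrite medge_Mc_gen // Mc_sum; apply: eq_bigl => x; by rewrite orbb andbA.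
Qed.

Lemma medge_Mc_neq (n : nat) (e : rel 'I_n) i j : symmetric e -> irreflexive e ->
  i != j -> (medge e i j * 2 = Mc e i j + Mc e j i)%N.
Proof.
move=> sym irr nij; rewrite medge_Mc_gen // !Mc_sum.
rewrite (bigID (fun x : 'I_n * 'I_n => (deg e x.1 == i) && (deg e x.2 == j))) /=.
congr (_ + _)%N; apply: eq_bigl => x.
  by case: (e _ _); case: (deg e x.1 == i); case: (deg e x.2 == j);
     case: (deg e x.1 == j); case: (deg e x.2 == i).
case: (e _ _) => //=.
case: (eqVneq (deg e x.1) i) => [->|ni]; first by rewrite (negbTE nij) /=; case: (_ == j).
by by rewrite /= andbT.
Qed.

Definition W (i j : nat) : RR :=
  Num.sqrt (((i%:R - 1) ^+ 2 + (j%:R - 1) ^+ 2)%R).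

Lemma card_part4 (T : finType) (A : pred T) (f : T -> nat) :
  (forall w, A w -> (1 <= f w <= 4)%N) ->
  #|[set w | A w]| = (#|[set w | A w && (f w == 1%N)]| + #|[set w | A w && (f w == 2%N)]|
    + #|[set w | A w && (f w == 3%N)]| + #|[set w | A w && (f w == 4%N)]|)%N.
Proof.
move=> hf; rewrite !card_sum -!big_split /=; apply: eq_bigr => w _.
case Aw: (A w) => //=.
have := hf w Aw; move: (f w) => a ha.
have : [|| a == 1%N, a == 2%N, a == 3%N | a == 4%N] by lia.
by case/or4P => /eqP ->.
Qed.

Lemma deg_range (n : nat) (e : rel 'I_n) x :
  chemical_tree e -> e x.1 x.2 -> (1 <= deg e x.1 <= 4)%N /\ (1 <= deg e x.2 <= 4)%N.
Proof.
move=> [[[sym _] _] ch] ex.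
rewrite (deg_pos ex) ch; rewrite sym in ex; by rewrite (deg_pos ex) ch.
Qed.

Lemma sum4n (F : nat -> nat) : sum4 F = (F 1%N + F 2%N + F 3%N + F 4%N)%N.
Proof. by []. Qed.

Lemma total_arcs (n : nat) (e : rel 'I_n) :
  chemical_tree e ->
  (sum4 (fun i => sum4 (fun j => Mc e i j)) = #|edges e| * 2)%N.
Proof.
move=> ct; have [[[sym irr] _] _] := ct.
have h1 := @part_arcs n e nat (fun _ => 1%N) (fun x => @deg_range n e x ct).
have h2 := @sum_arcs_edges n e nat (fun _ => 1%N) xpredT sym irr (fun _ => erefl) (fun _ => erefl).
have e1 : (\sum_(x | e x.1 x.2 && xpredT x) 1 = \sum_(x | e x.1 x.2) 1)%N.
  by apply: eq_bigl => x; rewrite andbT.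
have e2 : (\sum_(p in edges e | xpredT p) 1 = #|edges e|)%N.
  by rewrite -sum1_card; apply: eq_bigl => x; rewrite andbT.
have h2' : (\sum_(x | e x.1 x.2 && xpredT x) 1 =
   (\sum_(p in edges e | xpredT p) 1) + \sum_(p in edges e | xpredT p) 1)%N := etrans h2 (mulr2n _).
rewrite e1 e2 addnn -muln2 in h2'.
rewrite -h2' h1 /sum4 /=.
by rewrite !Mc_sum.
Qed.

Lemma SO_formula (n : nat) (e : rel 'I_n) :
  chemical_tree e ->
  (SO_red e *+ 2 = sum4 (fun i => sum4 (fun j => W i j *+ Mc e i j)))%R.
Proof.
move=> ct; have [[[sym irr] _] _] := ct.
have hW : forall x : 'I_n * 'I_n, W (deg e (x.2, x.1).1) (deg e (x.2, x.1).2) = W (deg e x.1) (deg e x.2).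
  by move=> x; rewrite /W /= GRing.addrC.
have h := @sum_arcs_edges n e RR (fun x => W (deg e x.1) (deg e x.2)) xpredT sym irr hW (fun _ => erefl).
have SOe : SO_red e = (\sum_(p in edges e | xpredT p) W (deg e p.1) (deg e p.2))%R.
  rewrite /SO_red; apply: eq_big => [p|p _]; first by rewrite andbT.
  by rewrite RsqrtE RplusE.
rewrite SOe -h.
rewrite (eq_bigl (fun x : 'I_n * 'I_n => e x.1 x.2)); last by move=> x; rewrite andbT.
rewrite (part_arcs _ (fun x => @deg_range n e x ct)) /sum4.
by rewrite !Mc_W.
Qed.

Local Open Scope ring_scope.

Definition s2 : RR := Num.sqrt 2.
Definition r5 : RR := Num.sqrt 5.
Definition r10 : RR := Num.sqrt 10.
Definition r13 : RR := Num.sqrt 13.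

Lemma sqrt_facts (k : nat) : (Num.sqrt (k%:R : RR)) ^+ 2 = k%:R /\ 0 <= Num.sqrt (k%:R : RR).
Proof. by rewrite sqr_sqrtr ?ler0n // sqrtr_ge0. Qed.

Lemma s2_b : 239 / 169 < s2 < 577 / 408.
Proof. have [h1 h2] := sqrt_facts 2; rewrite /s2; apply/andP; split; nra. Qed.
Lemma r5_b : 682 / 305 < r5 < 161 / 72.
Proof. have [h1 h2] := sqrt_facts 5; rewrite /r5; apply/andP; split; nra. Qed.
Lemma r10_b : 117 / 37 < r10 < 721 / 228.
Proof. have [h1 h2] := sqrt_facts 10; rewrite /r10; apply/andP; split; nra. Qed.
Lemma r13_b : 137 / 38 < r13 < 119 / 33.
Proof. have [h1 h2] := sqrt_facts 13; rewrite /r13; apply/andP; split; nra. Qed.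

Lemma gen_bound (SO nn N1 N2 N3 N4 m11 m12 m13 m14 m22 m23 m24 m33 m34 m44 : RR) :
  0 <= m13 -> 0 <= m14 -> 0 <= m23 -> 0 <= m24 -> 0 <= m34 ->
  m11 = 0 ->
  m11 + m12 + m13 + m14 = N1 ->
  m12 + m22 + m23 + m24 = 2 * N2 ->
  m13 + m23 + m33 + m34 = 3 * N3 ->
  m14 + m24 + m34 + m44 = 4 * N4 ->
  N1 + 2 * N2 + 3 * N3 + 4 * N4 = 2 * nn - 2 ->
  2 * SO = 2 * m12 + 4 * m13 + 6 * m14 + s2 * m22 + 2 * r5 * m23 + 2 * r10 * m24
     + 2 * s2 * m33 + 2 * r13 * m34 + 3 * s2 * m44 ->
  (1 - s2) * N1 + 3 / 2 * s2 * N3 + 4 * s2 * N4 <= SO - (nn - 1) * s2.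
Proof.
move=> p13 p14 p23 p24 p34 h11 R1 R2 R3 R4 Tot SO2.
have /andP [s_lo s_hi] := s2_b; have /andP [r5_lo r5_hi] := r5_b.
have /andP [r10_lo r10_hi] := r10_b; have /andP [r13_lo r13_hi] := r13_b.
have f13 : 0 <= m13 * (2 - s2) by apply: mulr_ge0 => //; lra.
have f14 : 0 <= m14 * (2 - s2) by apply: mulr_ge0 => //; lra.
have f23 : 0 <= m23 * (2 * r5 - 3 * s2) by apply: mulr_ge0 => //; lra.
have f24 : 0 <= m24 * (r10 - 2 * s2) by apply: mulr_ge0 => //; lra.
have f34 : 0 <= m34 * (2 * r13 - 5 * s2) by apply: mulr_ge0 => //; lra.
have R1s : (m11 + m12 + m13 + m14) * s2 = N1 * s2 by rewrite R1.
have h11s : m11 * s2 = 0 by rewrite h11 mul0r.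
have R2s : (m12 + m22 + m23 + m24) * s2 = 2 * N2 * s2 by rewrite R2.
have R3s : (m13 + m23 + m33 + m34) * s2 = 3 * N3 * s2 by rewrite R3.
have R4s : (m14 + m24 + m34 + m44) * s2 = 4 * N4 * s2 by rewrite R4.
have Tots : (N1 + 2 * N2 + 3 * N3 + 4 * N4) * s2 = (2 * nn - 2) * s2 by rewrite Tot.
lra.
Qed.

Lemma sqrt_sq (a : RR) : 0 <= a -> Num.sqrt (a ^+ 2) = a.
Proof. by move=> ha; rewrite sqrtr_sqr ger0_norm. Qed.

Lemma W11 : W 1 1 = 0.
Proof. rewrite /W; have -> : ((1%:R - 1) ^+ 2 + (1%:R - 1) ^+ 2 : RR) = 0 by ring. exact: sqrtr0. Qed.
Lemma W12 : W 1 2 = 1.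
Proof. rewrite /W; have -> : ((1%:R - 1) ^+ 2 + (2%:R - 1) ^+ 2 : RR) = 1 ^+ 2 by ring. by rewrite sqrt_sq. Qed.
Lemma W21 : W 2 1 = 1.
Proof. rewrite /W; have -> : ((2%:R - 1) ^+ 2 + (1%:R - 1) ^+ 2 : RR) = 1 ^+ 2 by ring. by rewrite sqrt_sq. Qed.
Lemma W13 : W 1 3 = 2.
Proof. rewrite /W; have -> : ((1%:R - 1) ^+ 2 + (3%:R - 1) ^+ 2 : RR) = 2 ^+ 2 by ring. by rewrite sqrt_sq. Qed.
Lemma W31 : W 3 1 = 2.
Proof. rewrite /W; have -> : ((3%:R - 1) ^+ 2 + (1%:R - 1) ^+ 2 : RR) = 2 ^+ 2 by ring. by rewrite sqrt_sq. Qed.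
Lemma W14 : W 1 4 = 3.
Proof. rewrite /W; have -> : ((1%:R - 1) ^+ 2 + (4%:R - 1) ^+ 2 : RR) = 3 ^+ 2 by ring. by rewrite sqrt_sq. Qed.
Lemma W41 : W 4 1 = 3.
Proof. rewrite /W; have -> : ((4%:R - 1) ^+ 2 + (1%:R - 1) ^+ 2 : RR) = 3 ^+ 2 by ring. by rewrite sqrt_sq. Qed.
Lemma W22 : W 2 2 = s2.
Proof. rewrite /W /s2; congr Num.sqrt; ring. Qed.
Lemma W23 : W 2 3 = r5.
Proof. rewrite /W /r5; congr Num.sqrt; ring. Qed.
Lemma W32 : W 3 2 = r5.
Proof. rewrite /W /r5; congr Num.sqrt; ring. Qed.
Lemma W24 : W 2 4 = r10.
Proof. rewrite /W /r10; congr Num.sqrt; ring. Qed.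
Lemma W42 : W 4 2 = r10.
Proof. rewrite /W /r10; congr Num.sqrt; ring. Qed.
Lemma W34 : W 3 4 = r13.
Proof. rewrite /W /r13; congr Num.sqrt; ring. Qed.
Lemma W43 : W 4 3 = r13.
Proof. rewrite /W /r13; congr Num.sqrt; ring. Qed.
Lemma W33 : W 3 3 = 2 * s2.
Proof.
rewrite /W /s2; have -> : ((3%:R - 1) ^+ 2 + (3%:R - 1) ^+ 2 : RR) = 2 ^+ 2 * 2 by ring.
by rewrite sqrtrM ?sqrt_sq // exprn_ge0.
Qed.
Lemma W44 : W 4 4 = 3 * s2.
Proof.
rewrite /W /s2; have -> : ((4%:R - 1) ^+ 2 + (4%:R - 1) ^+ 2 : RR) = 3 ^+ 2 * 2 by ring.
by rewrite sqrtrM ?sqrt_sq // exprn_ge0.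
Qed.

Lemma SO_real (n : nat) (e : rel 'I_n) :
  chemical_tree e ->
  SO_red e *+ 2 = 2 * (Mc e 1 2)%:R + 4 * (Mc e 1 3)%:R + 6 * (Mc e 1 4)%:R
    + s2 * (Mc e 2 2)%:R + 2 * r5 * (Mc e 2 3)%:R + 2 * r10 * (Mc e 2 4)%:R
    + 2 * s2 * (Mc e 3 3)%:R + 2 * r13 * (Mc e 3 4)%:R + 3 * s2 * (Mc e 4 4)%:R.
Proof.
move=> ct; have [[[sym _] _] _] := ct.
rewrite SO_formula // /sum4.
rewrite W11 W12 W21 W13 W31 W14 W41 W22 W23 W32 W24 W42 W34 W43 W33 W44.
rewrite (Mc_sym 2 1 sym) (Mc_sym 3 1 sym) (Mc_sym 4 1 sym) (Mc_sym 3 2 sym)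
  (Mc_sym 4 2 sym) (Mc_sym 4 3 sym).
ring.
Qed.

Lemma ndeg0 (n : nat) (e : rel 'I_n) :
  connected_graph e -> (2 <= n)%N -> ndeg e 0 = 0%N.
Proof.
move=> conn hn; apply/eqP; rewrite cards_eq0; apply/eqP/setP => v; rewrite !inE.
by apply/negbTE/eqP; apply: no_iso.
Qed.

Lemma ndeg_sum (n : nat) (e : rel 'I_n) :
  chemical_tree e -> (2 <= n)%N ->
  (ndeg e 1 + ndeg e 2 + ndeg e 3 + ndeg e 4 = n)%N.
Proof.
move=> [[_ [conn _]] ch] hn.
have h := @card_part4 _ xpredT (deg e) _.
have hc : #|[set w : 'I_n | xpredT w]| = n.
  have -> : [set w : 'I_n | xpredT w] = setT by apply/setP => w; rewrite !inE.
  by rewrite cardsT card_ord.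
rewrite -[RHS]hc h; first by rewrite /ndeg.
move=> w _; rewrite ch andbT lt0n; apply/eqP; exact: no_iso.
Qed.

Lemma Mc_expand (n : nat) (e : rel 'I_n) i j :
  Mc e i j = (\sum_(v | deg e v == i) #|[set w | e v w && (deg e w == j)]|)%N.
Proof. exact: (arcnt_row e (fun v => deg e v == i) (fun w => deg e w == j)). Qed.

Lemma Mc_row_sum (n : nat) (e : rel 'I_n) i :
  chemical_tree e ->
  (Mc e i 1 + Mc e i 2 + Mc e i 3 + Mc e i 4 = i * ndeg e i)%N.
Proof.
move=> ct; have [[[sym _] _] ch] := ct.
rewrite !Mc_expand -!big_split /=.
rewrite (eq_bigr (fun _ => i)).
  by rewrite sum_nat_const mulnC /ndeg; congr (_ * _)%N; apply: eq_card => v; rewrite !inE.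
move=> v /eqP <-.
rewrite /deg -(@card_part4 _ (fun w => e v w) (deg e)) //.
move=> w evw; exact: (proj2 (@deg_range n e (v, w) ct evw)).
Qed.

Lemma Mc11 (n : nat) (e : rel 'I_n) :
  chemical_tree e -> (3 <= n)%N -> Mc e 1 1 = 0%N.
Proof.
move=> [[[sym _] [conn _]] _] hn.
apply/eqP; rewrite cards_eq0; apply/eqP/setP => x; rewrite !inE.
apply/negP => /andP [/andP [ex /eqP d1] /eqP d2].
exact: (no_leafpair sym conn hn ex d1 d2).
Qed.

Lemma Mc_ii_le (n : nat) (e : rel 'I_n) i :
  irreflexive e -> (Mc e i i <= ndeg e i * (ndeg e i).-1)%N.
Proof.
move=> irr; rewrite Mc_expand.
have -> : (ndeg e i * (ndeg e i).-1 = \sum_(v | deg e v == i) (ndeg e i).-1)%N.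
  by rewrite sum_nat_const /ndeg; congr (_ * _)%N; apply: eq_card => v; rewrite !inE.
apply: leq_sum => v /eqP dv.
have -> : (ndeg e i).-1 = #|[set w | deg e w == i] :\ v|.
  by rewrite /ndeg (cardsD1 v [set w | deg e w == i]) inE dv eqxx.
apply: subset_leq_card; apply/subsetP => w; rewrite !inE => /andP [evw ->].
rewrite andbT; apply: contraTneq evw => ->; by rewrite irr.
Qed.

Lemma Mc_zero (n : nat) (e : rel 'I_n) i j u v :
  Mc e i j = 0%N -> e u v -> deg e u = i -> deg e v = j -> False.
Proof.
move=> /eqP; rewrite cards_eq0 => /eqP h euv du dv.
have : (u, v) \in [set x : 'I_n * 'I_n | e x.1 x.2 && (deg e x.1 == i) && (deg e x.2 == j)].
  by rewrite inE /= euv du dv !eqxx.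
by rewrite h inE.
Qed.

Lemma degenerate (n : nat) (e : rel 'I_n) :
  chemical_tree e -> Mc e 2 1 = 0%N -> Mc e 2 3 = 0%N -> Mc e 2 4 = 0%N ->
  (0 < ndeg e 2)%N -> (ndeg e 2 < n)%N -> False.
Proof.
move=> ct h1 h3 h4 p2 l2; have [[[sym _] [conn _]] _] := ct.
have [u uS] : exists u, u \in [set v | deg e v == 2%N].
  by move/card_gt0P: p2 => [u hu]; exists u.
have [w wS] := exists_out l2.
apply: (closed_nconn conn _ uS wS) => a b; rewrite !inE => /eqP da eab.
have [_ /andP [b1 b4]] := @deg_range n e (a, b) ct eab; simpl in b1, b4.
have : [|| deg e b == 1%N, deg e b == 2%N, deg e b == 3%N | deg e b == 4%N] by lia.
case/or4P => /eqP db //; exfalso.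
- exact: (Mc_zero h1 eab da db).
- exact: (Mc_zero h3 eab da db).
- exact: (Mc_zero h4 eab da db).
Qed.

Lemma no_tri_count (n : nat) (e : rel 'I_n) :
  is_tree e -> ndeg e 3 = 3%N -> Mc e 3 3 = 6%N -> False.
Proof.
move=> tr n3 m33; have [[sym irr] _] := tr.
pose D := [set v | deg e v == 3%N].
pose N := fun v => [set w | e v w && (deg e w == 3%N)].
have hM : (Mc e 3 3 = \sum_(v | deg e v == 3%N) #|N v|)%N.
  by rewrite Mc_expand.
have hD : #|D| = 3%N by rewrite -n3.
have hsub : forall v, N v \subset D :\ v.
  move=> v; apply/subsetP => w; rewrite !inE => /andP [evw ->].
  rewrite andbT; apply: contraTneq evw => ->; by rewrite irr.
have hDv : forall v, v \in D -> #|D :\ v| = 2%N.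
  by move=> v vD; move: hD; rewrite (cardsD1 v D) vD /= => [[]].
have hge : forall v, v \in D -> (2 <= #|N v|)%N.
  move=> v vD.
  have : (6 <= #|N v| + 2 * 2)%N.
    rewrite -m33 hM (bigD1 v) /=; last by move: vD; rewrite inE.
    rewrite leq_add2l.
    have -> : (2 * 2 = \sum_(u | (deg e u == 3%N) && (u != v)) 2)%N.
      rewrite sum_nat_const mulnC; congr (_ * _)%N; rewrite -[LHS](hDv v vD).
      by apply: eq_card => u; rewrite !inE; apply: andbC.
    apply: leq_sum => u /andP [uD _].
    have := subset_leq_card (hsub u); rewrite hDv //; by rewrite inE.
  lia.
have hN : forall v, v \in D -> N v = D :\ v.
  move=> v vD; apply/eqP; rewrite eqEcard hsub hDv //; exact: hge.
have [a aD] : exists a, a \in D by apply/card_gt0P; rewrite hD.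
have /cards2P [b [c [nbc hbc]]] : #|D :\ a| == 2%N by rewrite hDv.
have bN : b \in N a by rewrite hN // hbc !inE eqxx.
have cN : c \in N a by rewrite hN // hbc !inE eqxx orbT.
have bD : b \in D by have := subD1set D a; move/subsetP; apply; rewrite hbc !inE eqxx.
have cD : c \in D by have := subD1set D a; move/subsetP; apply; rewrite hbc !inE eqxx orbT.
have cNb : c \in N b by rewrite hN // !inE eq_sym nbc; move: cD; rewrite inE.
move: bN cN cNb; rewrite !inE => /andP [eab _] /andP [eac _] /andP [ebc _].
exact: (no_triangle tr eab ebc eac).
Qed.

Lemma pair5 (a b c d f a' b' c' d' f' : nat) :
  a = a' -> b = b' -> c = c' -> d = d' -> f = f' -> (a, b, c, d, f) = (a', b', c', d', f').
Proof. by move=> -> -> -> -> ->. Qed.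

Definition vval (v : nat * nat * nat * nat * nat) : RR :=
  let: (a, b, c, d, f) := v in
  c%:R + 2 * d%:R + s2 * f%:R + r5 * b%:R + 2 * s2 * a%:R.

Lemma nat_real (a b : nat) : a = b -> (a%:R : RR) = b%:R.
Proof. by move=> ->. Qed.

Lemma SO_vec (n : nat) (e : rel 'I_n) :
  chemical_tree e ->
  (medge e 3 3 + medge e 2 3 + medge e 1 2 + medge e 1 3 + medge e 2 2 = n.-1)%N ->
  SO_red e = vval (mvec e).
Proof.
move=> ct hs; have [[[sym irr] [_ hE]] _] := ct.
have t : (Mc e 1 1 + Mc e 1 2 + Mc e 1 3 + Mc e 1 4 + (Mc e 2 1 + Mc e 2 2 + Mc e 2 3 + Mc e 2 4)
   + (Mc e 3 1 + Mc e 3 2 + Mc e 3 3 + Mc e 3 4) + (Mc e 4 1 + Mc e 4 2 + Mc e 4 3 + Mc e 4 4)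
   = #|edges e| * 2)%N := total_arcs ct.
rewrite hE in t.
have s21 := Mc_sym 2 1 sym; have s31 := Mc_sym 3 1 sym; have s41 := Mc_sym 4 1 sym.
have s32 := Mc_sym 3 2 sym; have s42 := Mc_sym 4 2 sym; have s43 := Mc_sym 4 3 sym.
have e33 := medge_Mc_eq 3 sym irr; have e22 := medge_Mc_eq 2 sym irr.
have e23 := @medge_Mc_neq n e 2%N 3%N sym irr isT.
have e12 := @medge_Mc_neq n e 1%N 2%N sym irr isT.
have e13 := @medge_Mc_neq n e 1%N 3%N sym irr isT.
have z14 : Mc e 1 4 = 0%N by lia.
have z24 : Mc e 2 4 = 0%N by lia.
have z34 : Mc e 3 4 = 0%N by lia.
have z44 : Mc e 4 4 = 0%N by lia.
have q12 : Mc e 1 2 = medge e 1 2 by lia.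
have q13 : Mc e 1 3 = medge e 1 3 by lia.
have q23 : Mc e 2 3 = medge e 2 3 by lia.
have q22 : Mc e 2 2 = (medge e 2 2 * 2)%N by lia.
have q33 : Mc e 3 3 = (medge e 3 3 * 2)%N by lia.
have h := SO_real ct.
rewrite z14 z24 z34 z44 q12 q13 q23 q22 q33 !natrM in h.
rewrite /vval /mvec /=.
lra.
Qed.

Lemma Avec_sum n i : (1 <= i <= 13)%N -> (13 <= n)%N ->
  (let: (a, b, c, d, f) := Avec n i in a + b + c + d + f = n.-1)%N.
Proof.
move=> h hn.
case: i h => [|[|[|[|[|[|[|[|[|[|[|[|[|[|i]]]]]]]]]]]]]] //= _; lia.
Qed.

Lemma inA_SO n i (e : rel 'I_n) : (1 <= i <= 13)%N -> (13 <= n)%N ->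
  inA i e -> SO_red e = vval (Avec n i).
Proof.
move=> hi hn [ct [_ [_ hm]]]; rewrite (SO_vec ct) ?hm //.
have := Avec_sum hi hn; rewrite -hm /mvec; done.
Qed.

Definition cvec (n k : nat) : nat * nat * nat * nat * nat :=
  (match k with
  | 1 => Avec n 1 | 2 => Avec n 4 | 3 => Avec n 3 | 4 => Avec n 2
  | 14 => (2, 5, 5, 0, n - 13)
  | _ => Avec n (18 - k) end)%N.

Lemma class_SO n k (e : rel 'I_n) : (13 <= n)%N -> (1 <= k <= 14)%N ->
  classT k e -> SO_red e = vval (cvec n k).
Proof.
move=> hn hk.
case: k hk => [|[|[|[|[|[|[|[|[|[|[|[|[|[|[|k]]]]]]]]]]]]]]] //= _;
  try (by move=> h; apply: inA_SO h).
move=> [ct [h3 [h2 [h1 [m12 [m23 [m13 [m33 m22]]]]]]]].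
rewrite (SO_vec ct); first by rewrite /mvec m12 m23 m13 m33 m22.
rewrite m12 m23 m13 m33 m22; lia.
Qed.

Lemma natrB_c (c n : nat) : (c <= n)%N -> ((n - c)%:R : RR) = n%:R - c%:R.
Proof. exact: natrB. Qed.

Lemma cvec_lt n k : (13 <= n)%N -> (1 <= k < 14)%N ->
  vval (cvec n k) < vval (cvec n k.+1).
Proof.
move=> hn hk.
have /andP [s_lo s_hi] := s2_b; have /andP [r5_lo r5_hi] := r5_b.
case: k hk => [|[|[|[|[|[|[|[|[|[|[|[|[|[|k]]]]]]]]]]]]]] //= _;
  rewrite /vval /=; do ?(rewrite natrB_c; last by lia); lra.
Qed.

Lemma caseA (SO nn N1 N2 N3 N4 m11 m12 m13 m14 m22 m23 m24 m33 m34 m44 : RR) :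
  0 <= m13 -> 0 <= m14 -> 0 <= m23 -> 0 <= m24 -> 0 <= m34 ->
  m11 = 0 ->
  m11 + m12 + m13 + m14 = N1 ->
  m12 + m22 + m23 + m24 = 2 * N2 ->
  m13 + m23 + m33 + m34 = 3 * N3 ->
  m14 + m24 + m34 + m44 = 4 * N4 ->
  N1 + 2 * N2 + 3 * N3 + 4 * N4 = 2 * nn - 2 ->
  N1 + N2 + N3 + N4 = nn ->
  2 * SO = 2 * m12 + 4 * m13 + 6 * m14 + s2 * m22 + 2 * r5 * m23 + 2 * r10 * m24
     + 2 * s2 * m33 + 2 * r13 * m34 + 3 * s2 * m44 ->
  0 <= N3 -> 0 <= N4 ->
  (4 <= N3) \/ (2 <= N4) \/ (1 <= N3 /\ 1 <= N4) ->
  5 * r5 + 5 + (nn - 9) * s2 < SO.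
Proof.
move=> p13 p14 p23 p24 p34 h11 R1 R2 R3 R4 Tot Cnt SO2 n3p n4p hc.
have gb := gen_bound p13 p14 p23 p24 p34 h11 R1 R2 R3 R4 Tot SO2.
have /andP [s_lo s_hi] := s2_b; have /andP [r5_lo r5_hi] := r5_b.
have eN1 : N1 = 2 + N3 + 2 * N4 by lra.
have N1s : N1 * s2 = (2 + N3 + 2 * N4) * s2 by rewrite eN1.
case: hc => [h3|[h4|[h3 h4]]].
- have f3 : 0 <= (N3 - 4) * (2 + s2) by apply: mulr_ge0; lra.
  have f4 : 0 <= N4 * (1 + s2) by apply: mulr_ge0; lra.
  lra.
- have f3 : 0 <= N3 * (2 + s2) by apply: mulr_ge0; lra.
  have f4 : 0 <= (N4 - 2) * (1 + s2) by apply: mulr_ge0; lra.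
  lra.
- have f3 : 0 <= (N3 - 1) * (2 + s2) by apply: mulr_ge0; lra.
  have f4 : 0 <= (N4 - 1) * (1 + s2) by apply: mulr_ge0; lra.
  lra.
Qed.

Lemma caseA4 (SO nn N1 N2 N3 N4 m11 m12 m13 m14 m22 m23 m24 m33 m34 m44 : RR) :
  0 <= m13 -> 0 <= m14 -> 0 <= m23 -> 0 <= m24 -> 0 <= m33 -> 0 <= m34 ->
  m11 = 0 -> m44 = 0 ->
  m11 + m12 + m13 + m14 = N1 ->
  m12 + m22 + m23 + m24 = 2 * N2 ->
  m13 + m23 + m33 + m34 = 3 * N3 ->
  m14 + m24 + m34 + m44 = 4 * N4 ->
  N1 + 2 * N2 + 3 * N3 + 4 * N4 = 2 * nn - 2 ->
  N1 + N2 + N3 + N4 = nn ->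
  2 * SO = 2 * m12 + 4 * m13 + 6 * m14 + s2 * m22 + 2 * r5 * m23 + 2 * r10 * m24
     + 2 * s2 * m33 + 2 * r13 * m34 + 3 * s2 * m44 ->
  N3 = 0 -> N4 = 1 ->
  5 * r5 + 5 + (nn - 9) * s2 < SO.
Proof.
move=> p13 p14 p23 p24 p33 p34 h11 h44 R1 R2 R3 R4 Tot Cnt SO2 h3 h4.
have /andP [s_lo s_hi] := s2_b; have /andP [r5_lo r5_hi] := r5_b.
have /andP [r10_lo r10_hi] := r10_b.
have z13 : m13 = 0 by lra.
have z23 : m23 = 0 by lra.
have z33 : m33 = 0 by lra.
have z34 : m34 = 0 by lra.
have e12 : m12 = 4 - m14 by lra.
have e24 : m24 = 4 - m14 by lra.
have e22 : m22 = 2 * nn - 2 - 2 * m12 - 2 * m14 - 2 * m24 by lra.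
rewrite z13 z23 z33 z34 h44 e22 e12 e24 in SO2.
have f : 0 <= m14 * (2 + s2 - r10) by apply: mulr_ge0; lra.
lra.
Qed.

Lemma caseA5 (SO nn N1 N2 N3 N4 m11 m12 m13 m14 m22 m23 m24 m33 m34 m44 : RR) :
  0 <= m13 -> 0 <= m14 -> 0 <= m23 -> 0 <= m24 -> 0 <= m33 -> 0 <= m34 -> 0 <= m44 ->
  m11 = 0 ->
  m11 + m12 + m13 + m14 = N1 ->
  m12 + m22 + m23 + m24 = 2 * N2 ->
  m13 + m23 + m33 + m34 = 3 * N3 ->
  m14 + m24 + m34 + m44 = 4 * N4 ->
  N1 + 2 * N2 + 3 * N3 + 4 * N4 = 2 * nn - 2 ->
  N1 + N2 + N3 + N4 = nn ->
  2 * SO = 2 * m12 + 4 * m13 + 6 * m14 + s2 * m22 + 2 * r5 * m23 + 2 * r10 * m24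
     + 2 * s2 * m33 + 2 * r13 * m34 + 3 * s2 * m44 ->
  N3 = 3 -> N4 = 0 ->
  (m33 <= 2) \/ (m33 = 4 /\ 1 <= m13) ->
  5 * r5 + 5 + (nn - 9) * s2 < SO.
Proof.
move=> p13 p14 p23 p24 p33 p34 p44 h11 R1 R2 R3 R4 Tot Cnt SO2 h3 h4 hc.
have /andP [s_lo s_hi] := s2_b; have /andP [r5_lo r5_hi] := r5_b.
have z14 : m14 = 0 by lra.
have z24 : m24 = 0 by lra.
have z34 : m34 = 0 by lra.
have z44 : m44 = 0 by lra.
have e12 : m12 = 5 - m13 by lra.
have e23 : m23 = 9 - m13 - m33 by lra.
have e22 : m22 = 2 * nn - 2 - 2 * m12 - 2 * m13 - 2 * m23 - m33 by lra.
rewrite z14 z24 z34 z44 e22 e12 e23 in SO2.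
case: hc => [c1|[c2 c3]].
- have f1 : 0 <= m13 * (1 + s2 - r5) by apply: mulr_ge0; lra.
  have f2 : 0 <= (2 - m33) * (2 * r5 - 3 * s2) by apply: mulr_ge0; lra.
  lra.
- rewrite c2 in SO2.
  have f1 : 0 <= (m13 - 1) * (1 + s2 - r5) by apply: mulr_ge0; lra.
  lra.
Qed.

Lemma mk_inA n i (T : rel 'I_n) :
  chemical_tree T -> ndeg T 4 = 0%N -> (ndeg T 3 <= 2)%N -> mvec T = Avec n i -> inA i T.
Proof.
move=> ct n4 n3 hm; split=> //; split=> //.
move=> v; have [_ ch] := ct; have := ch v.
rewrite leq_eqVlt => /orP [/eqP d4|]; last by [].
have : v \in [set w | deg T w == 4%N] by rewrite inE d4.
by move/eqP: n4; rewrite cards_eq0 => /eqP ->; rewrite inE.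
Qed.

Ltac finA i := exists i; split; [done | apply: mk_inA; (try done); (try lia); rewrite /mvec /=; apply: pair5; lia].

Lemma T_bound n (hn : (13 <= n)%N) (T : rel 'I_n) :
  chemical_tree T -> ~ (exists i, (1 <= i <= 13)%N /\ inA i T) -> ~ inOmega T ->
  5 * r5 + 5 + (n%:R - 9) * s2 < SO_red T.
Proof.
move=> ct notA notO.
have [[[sym irr] [conn hE]] ch] := ct.
have n0 := ndeg0 conn (leq_trans (isT : (2 <= 13)%N) hn).
have cnt := ndeg_sum ct (leq_trans (isT : (2 <= 13)%N) hn).
have R1 := Mc_row_sum 1%N ct; have R2 := Mc_row_sum 2%N ct.
have R3 := Mc_row_sum 3%N ct; have R4 := Mc_row_sum 4%N ct.
have t : (Mc T 1 1 + Mc T 1 2 + Mc T 1 3 + Mc T 1 4 + (Mc T 2 1 + Mc T 2 2 + Mc T 2 3 + Mc T 2 4)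
   + (Mc T 3 1 + Mc T 3 2 + Mc T 3 3 + Mc T 3 4) + (Mc T 4 1 + Mc T 4 2 + Mc T 4 3 + Mc T 4 4)
   = #|edges T| * 2)%N := total_arcs ct.
rewrite hE in t.
have m11 := Mc11 ct (leq_trans (isT : (3 <= 13)%N) hn).
have s21 := Mc_sym 2 1 sym; have s31 := Mc_sym 3 1 sym; have s41 := Mc_sym 4 1 sym.
have s32 := Mc_sym 3 2 sym; have s42 := Mc_sym 4 2 sym; have s43 := Mc_sym 4 3 sym.
rewrite s21 in R2; rewrite s31 s32 in R3; rewrite s41 s42 s43 in R4.
have le33 := Mc_ii_le 3%N irr; have le44 := Mc_ii_le 4%N irr.
have e33 := medge_Mc_eq 3%N sym irr; have e22 := medge_Mc_eq 2%N sym irr.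
have e23 := @medge_Mc_neq n T 2%N 3%N sym irr isT.
have e12 := @medge_Mc_neq n T 1%N 2%N sym irr isT.
have e13 := @medge_Mc_neq n T 1%N 3%N sym irr isT.
have hand : (ndeg T 1 + 2 * ndeg T 2 + 3 * ndeg T 3 + 4 * ndeg T 4 + 2 = 2 * n)%N by lia.
have SO2 := SO_real ct.
have rR1 := nat_real R1; have rR2 := nat_real R2; have rR3 := nat_real R3; have rR4 := nat_real R4.
have rcnt := nat_real cnt; have rhand := nat_real hand; have rm11 := nat_real m11.
rewrite ?natrD ?natrM in rR1 rR2 rR3 rR4 rcnt rhand.
have p : forall i j, 0 <= (Mc T i j)%:R :> RR by move=> i j; exact: ler0n.
have pN : forall i, 0 <= (ndeg T i)%:R :> RR by move=> i; exact: ler0n.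
have /andP [s_lo s_hi] := s2_b.
have [n4z|n4p] := eqVneq (ndeg T 4) 0%N.
  have z14 : Mc T 1 4 = 0%N by lia.
  have z24 : Mc T 2 4 = 0%N by lia.
  have z34 : Mc T 3 4 = 0%N by lia.
  have z44 : Mc T 4 4 = 0%N by lia.
  have [n3le|n3gt] := leqP (ndeg T 3) 2%N.
    exfalso; apply: notA.
    have : ndeg T 3 = 0%N \/ ndeg T 3 = 1%N \/ ndeg T 3 = 2%N by lia.
    case=> [n3z|[n3o|n3t]].
    - finA 1%N.
    - have z33 : Mc T 3 3 = 0%N by move: le33; rewrite n3o /=; lia.
      have : Mc T 1 2 = 0%N \/ Mc T 1 2 = 1%N \/ Mc T 1 2 = 2%N \/ Mc T 1 2 = 3%N by lia.
      case=> [a|[a|[a|a]]].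
      + exfalso; apply: (degenerate ct) => //; try lia.
      + finA 2%N.
      + finA 3%N.
      + finA 4%N.
    - have : Mc T 3 3 = 0%N \/ Mc T 3 3 = 2%N.
        by move: le33; rewrite n3t /=; lia.
      case=> [z33|t33].
      + have : Mc T 1 2 = 0%N \/ Mc T 1 2 = 1%N \/ Mc T 1 2 = 2%N \/ Mc T 1 2 = 3%N
           \/ Mc T 1 2 = 4%N by lia.
        case=> [a|[a|[a|[a|a]]]].
        * finA 5%N.
        * finA 6%N.
        * finA 7%N.
        * finA 9%N.
        * finA 11%N.
      + have : Mc T 1 2 = 0%N \/ Mc T 1 2 = 1%N \/ Mc T 1 2 = 2%N \/ Mc T 1 2 = 3%N
           \/ Mc T 1 2 = 4%N by lia.
        case=> [a|[a|[a|[a|a]]]].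
        * exfalso; apply: (degenerate ct) => //; try lia.
        * finA 8%N.
        * finA 10%N.
        * finA 12%N.
        * finA 13%N.
  have n3e : ndeg T 3 = 3%N \/ (4 <= ndeg T 3)%N by lia.
  case: n3e => [n3e|n3g].
    have n6 : Mc T 3 3 <> 6%N by move=> h6; apply: (no_tri_count (proj1 ct) n3e h6).
    have : (Mc T 3 3 <= 6)%N by move: le33; rewrite n3e.
    have [om|nom] : (Mc T 3 3 = 4%N /\ Mc T 1 3 = 0%N) \/
                    ((Mc T 3 3 <= 2)%N \/ (Mc T 3 3 = 4%N /\ (1 <= Mc T 1 3)%N)) by lia.
      exfalso; apply: notO.
      do !split => //; lia.
    move=> _.
    have c : ((Mc T 3 3)%:R <= 2 :> RR) \/ ((Mc T 3 3)%:R = 4 :> RR /\ 1 <= (Mc T 1 3)%:R :> RR).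
      case: nom => [h|[h1 h2]]; [left; by rewrite ler_nat | right; split; [by rewrite h1 | by rewrite ler1n]].
    apply: (@caseA5 (SO_red T) n%:R (ndeg T 1)%:R (ndeg T 2)%:R (ndeg T 3)%:R (ndeg T 4)%:R
      (Mc T 1 1)%:R (Mc T 1 2)%:R (Mc T 1 3)%:R (Mc T 1 4)%:R (Mc T 2 2)%:R (Mc T 2 3)%:R
      (Mc T 2 4)%:R (Mc T 3 3)%:R (Mc T 3 4)%:R (Mc T 4 4)%:R) => //; try lra.
    - by rewrite n3e.
    - by rewrite n4z.
  apply: (@caseA (SO_red T) n%:R (ndeg T 1)%:R (ndeg T 2)%:R (ndeg T 3)%:R (ndeg T 4)%:R
      (Mc T 1 1)%:R (Mc T 1 2)%:R (Mc T 1 3)%:R (Mc T 1 4)%:R (Mc T 2 2)%:R (Mc T 2 3)%:R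
      (Mc T 2 4)%:R (Mc T 3 3)%:R (Mc T 3 4)%:R (Mc T 4 4)%:R) => //; try lra.
  by left; rewrite (ler_nat RR 4).
move/eqP: n4p => n4p.
have [[n41 n30]|nA] : (ndeg T 4 = 1%N /\ ndeg T 3 = 0%N) \/
                  ((4 <= ndeg T 3)%N \/ (2 <= ndeg T 4)%N \/ ((1 <= ndeg T 3)%N /\ (1 <= ndeg T 4)%N)).
    by lia.
  have z44 : Mc T 4 4 = 0%N by move: le44; rewrite n41 /=; lia.
  apply: (@caseA4 (SO_red T) n%:R (ndeg T 1)%:R (ndeg T 2)%:R (ndeg T 3)%:R (ndeg T 4)%:R
      (Mc T 1 1)%:R (Mc T 1 2)%:R (Mc T 1 3)%:R (Mc T 1 4)%:R (Mc T 2 2)%:R (Mc T 2 3)%:R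
      (Mc T 2 4)%:R (Mc T 3 3)%:R (Mc T 3 4)%:R (Mc T 4 4)%:R) => //; try lra.
  - by rewrite z44.
  - by rewrite n30.
  - by rewrite n41.
apply: (@caseA (SO_red T) n%:R (ndeg T 1)%:R (ndeg T 2)%:R (ndeg T 3)%:R (ndeg T 4)%:R
      (Mc T 1 1)%:R (Mc T 1 2)%:R (Mc T 1 3)%:R (Mc T 1 4)%:R (Mc T 2 2)%:R (Mc T 2 3)%:R
      (Mc T 2 4)%:R (Mc T 3 3)%:R (Mc T 3 4)%:R (Mc T 4 4)%:R) => //; try lra.
case: nA => [h|[h|[h h']]].
- by left; rewrite (ler_nat RR 4).
- by right; left; rewrite (ler_nat RR 2).
- by right; right; split; rewrite ler1n.
Qed.

Local Close Scope ring_scope.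

Theorem theorem3p4 (n : nat) (hn : (13 <= n)%N)
  (Ts : nat -> rel 'I_n) (T : rel 'I_n) :
  (forall k, (1 <= k <= 14)%N -> classT k (Ts k)) ->
  chemical_tree T ->
  ~ (exists i, (1 <= i <= 13)%N /\ inA i T) ->
  ~ inOmega T ->
  (forall k, (1 <= k < 14)%N -> (SO_red (Ts k) < SO_red (Ts k.+1))%R) /\
  (SO_red (Ts 14%N) < SO_red T)%R.
Proof.
move=> hTs ct notA notO; split.
  move=> k hk.
  have h1 : (1 <= k <= 14)%N by lia.
  have h2 : (1 <= k.+1 <= 14)%N by lia.
  rewrite (class_SO hn h1 (hTs k h1)) (class_SO hn h2 (hTs k.+1 h2)).
  exact: cvec_lt.
have h14 : (1 <= 14 <= 14)%N by [].
rewrite (class_SO hn h14 (hTs 14 h14)).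
have := T_bound hn ct notA notO.
rewrite /cvec /vval /= natrB_c //.
have /andP [s_lo s_hi] := s2_b.
move=> h; lra.
Qed.
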